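(* Let $G$ be a finite graph whose vertex set is partitioned into stable sets $V_1,\ldots,V_r$. Let $x_1$ be a vertex in $V_r$, and suppose that $G[V_{[r-1]}]$ has an ISR (with respect to the partition $V_1,\ldots,V_{r-1}$). Suppose there do not exist a set $J \subseteq [r-1]$ and a set $D \subseteq V_J \cup \{x_1\}$ totally dominating $V_J \cup \{x_1\}$ with the following properties: (1) $D$ is the union of disjoint stable sets $X$ and $Y$; (2) $Y$ is a (not necessarily proper) partial ISR for $V_J$ (so $|Y| \le |J|$); (3) every vertex in $Y$ has exactly one neighbour in $X$ (so $|X| \le |Y|$); (4) $X$ contains $x_1$. Then $G$ has an ISR containing $x_1$.
   Context: For $J \subseteq [r] = \{1,\ldots,r\}$, $V_J$ denotes $\bigcup_{i \in J} V_i$ (with the partition into the sets $V_i$, $i\in J$), and $G[\cdot]$ denotes an induced subgraph, which inherits the partition. An independent system of representatives (ISR) of $(V_1,\ldots,V_r)$ is a stable set of size $r$ in $G$ meeting each $V_i$ exactly once. A partial ISR for $V_J$ is a stable set contained in $V_J$ meeting each $V_i$ ($i \in J$) at most once. A set $D$ totally dominates a vertex set $W$ if every vertex of $W$ (including those in $D$) has a neighbour in $D$. *)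

(* Defs.v *)
From mathcomp Require Import all_boot.
Set Implicit Arguments. Unset Strict Implicit. Unset Printing Implicit Defensive.

(* A finite simple graph on vertex type T: adjacency e, symmetric and irreflexive.
   The vertex partition is given by a class map part : T -> I (class V_i = part^-1(i)). *)

Definition simple_graph (T : finType) (e : rel T) : Prop :=
  symmetric e /\ irreflexive e.

Definition stable (T : finType) (e : rel T) (S : {set T}) : Prop :=
  forall x y, x \in S -> y \in S -> ~~ e x y.

Definition VJ (T I : finType) (part : T -> I) (J : {set I}) : {set T} :=
  [set v | part v \in J].

Definition partial_ISR (T I : finType) (e : rel T) (part : T -> I) (J : {set I})
  (S : {set T}) : Prop :=
  [/\ S \subset VJ part J, stable e S &
      forall i, i \in J -> #|[set v in S | part v == i]| <= 1].

Definition ISR (T I : finType) (e : rel T) (part : T -> I) (J : {set I})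
  (S : {set T}) : Prop :=
  [/\ S \subset VJ part J, stable e S &
      forall i, i \in J -> #|[set v in S | part v == i]| = 1].

Definition totally_dominates (T : finType) (e : rel T) (D W : {set T}) : Prop :=
  forall w, w \in W -> exists2 d, d \in D & e w d.

(* Main.v *)
Require Import Defs.
From mathcomp Require Import all_boot.
Set Implicit Arguments. Unset Strict Implicit. Unset Printing Implicit Defensive.

Record Inv (T : finType) (e : rel T) (r : nat) (part : T -> 'I_r.+1) (x1 : T)
  (I : {set T}) (s : seq T) : Prop := MkInv {
 inv_isr : ISR e part [set~ ord_max] I;
 inv_size : 0 < size s;
 inv_head : nth x1 s 0 = x1;
 inv_uniq : uniq s;
 inv_stab : forall a b, a \in s -> b \in s -> ~~ e a b;
 inv_uniqnb : forall y a b, y \in I -> a \in s -> b \in s -> e y a -> e y b -> a = b;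
 inv_ord : forall k, 0 < k < size s -> exists2 y, y \in I &
     part y = part (nth x1 s k) /\ exists2 m, m < k & e y (nth x1 s m) }.

Lemma isr_sub (T : finType) (e : rel T) r (part : T -> 'I_r.+1) I v :
  ISR e part [set~ ord_max] I -> v \in I -> part v != ord_max.
Proof. by case=> /subsetP h _ _ /h; rewrite !inE. Qed.

Lemma step_x1 (T : finType) (e : rel T) r (part : T -> 'I_r.+1) x1 I :
  simple_graph e -> part x1 = ord_max -> ISR e part [set~ ord_max] I ->
  (forall y, y \in I -> ~~ e y x1) ->
  exists S, ISR e part setT S /\ x1 \in S.
Proof.
move=> [esym eirr] hx1 hI hno; exists (x1 |: I); split; last by rewrite setU11.
have [_ hst hc] := hI.
split.
- by apply/subsetP => v _; rewrite inE in_setT.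
- move=> v w; rewrite !in_setU1 => /orP[/eqP->|hv] /orP[/eqP->|hw].
  + by rewrite eirr.
  + by rewrite esym hno.
  + by rewrite hno.
  + exact: hst.
- move=> i _; case: (eqVneq i ord_max) => [->|hi].
  + have -> : [set v in x1 |: I | part v == ord_max] = [set x1].
      apply/setP => v; rewrite !inE; case: (eqVneq v x1) => [->|hv] /=.
        by rewrite hx1 eqxx.
      by apply/andP => -[hvI hp]; move: (isr_sub hI hvI); rewrite hp.
    by rewrite cards1.
  + rewrite -(hc i); last by rewrite !inE.
    apply: eq_card => v; rewrite !inE; case: (eqVneq v x1) => [->|hv] //=.
    by rewrite hx1 eq_sym (negbTE hi) andbF.
Qed.
Fixpoint enc (c : nat) (l : seq nat) : nat :=
  match l with [::] => 0 | a :: l' => a * c ^ size l' + enc c l' end.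

Lemma enc_bound c l : all (fun a => a < c) l -> enc c l < c ^ size l.
Proof.
elim: l => [|a l IH] /=; first by rewrite expn0.
move=> /andP[ha hl]; have := IH hl.
rewrite expnS => h.
have h2 : a * c ^ size l + c ^ size l <= c * c ^ size l.
  by rewrite -mulSnr leq_mul2r ha orbT.
by apply: leq_trans h2; rewrite ltn_add2l.
Qed.

Lemma enc_lt c (l l' : seq nat) j :
  size l = size l' -> j < size l ->
  (forall i, i < j -> nth 0 l' i = nth 0 l i) ->
  nth 0 l' j < nth 0 l j -> all (fun a => a < c) l' -> enc c l' < enc c l.
Proof.
elim: l l' j => [|a l IH] [|a' l'] j //= [hs] hj heq hlt /andP[ha hl].
case: j hj heq hlt => [|j] hj heq hlt /=.
  have := @enc_bound c l' hl; rewrite -hs => hb.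
  apply: (@leq_trans (a' * c ^ size l + c ^ size l)); first by rewrite ltn_add2l.
  rewrite -mulSnr; apply: leq_trans (leq_addr _ _); by rewrite leq_mul2r hlt orbT.
have -> : a' = a by apply: (heq 0).
rewrite -hs ltn_add2l; apply: (IH l' j) => //.
by move=> i hi; apply: (heq i.+1).
Qed.

Definition nbI (T : finType) (e : rel T) (I : {set T}) (x : T) := #|[set y in I | e y x]|.
Definition qv (T : finType) (e : rel T) (x1 : T) (I : {set T}) (s : seq T) (k : nat) :=
  if k < size s then nbI e I (nth x1 s k) else #|T|.+1.
Definition Phi (T : finType) (e : rel T) (x1 : T) (I : {set T}) (s : seq T) :=
  enc #|T|.+2 (mkseq (qv e x1 I s) #|T|).

Lemma Phi_lt (T : finType) (e : rel T) x1 I I' s s' j :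
  j < #|T| -> (forall i, i < j -> qv e x1 I' s' i = qv e x1 I s i) ->
  qv e x1 I' s' j < qv e x1 I s j -> Phi e x1 I' s' < Phi e x1 I s.
Proof.
move=> hj heq hlt; apply: (@enc_lt _ _ _ j).
- by rewrite !size_mkseq.
- by rewrite size_mkseq.
- by move=> i hi; rewrite !nth_mkseq ?heq // (ltn_trans hi hj).
- by rewrite !nth_mkseq.
- apply/allP => a /mapP [i _ ->]; rewrite /qv; case: ifP => _ //.
  by rewrite /nbI ltnS (leq_trans (max_card _)).
Qed.

Lemma uniq_size_le (T : finType) (s : seq T) : uniq s -> size s <= #|T|.
Proof. by move=> /card_uniqP <-; apply: max_card. Qed.

Lemma step_swap (T : finType) (e : rel T) r (part : T -> 'I_r.+1) x1 I s k :
  simple_graph e -> Inv e part x1 I s -> 0 < k < size s ->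
  (forall y, y \in I -> ~~ e y (nth x1 s k)) ->
  exists I' s', Inv e part x1 I' s' /\ Phi e x1 I' s' < Phi e x1 I s.
Proof.
move=> [esy eirr] hinv hk hno.
have [hisr hsz hhd hun hst hnb hord] := hinv.
set z := nth x1 s k.
have [y yI [py [m mk eym]]] := hord k hk.
have ks : k < size s by case/andP: hk.
have ms : m < size s := ltn_trans mk ks.
have zs : z \in s by apply: mem_nth.
have xms : nth x1 s m \in s by apply: mem_nth.
have zy : z != y.
  by apply/eqP => zy; move: (hst _ _ zs xms); rewrite zy eym.
set I' := z |: (I :\ y).
set s' := take m.+1 s.
have szs' : size s' = m.+1 by rewrite size_takel.
have nths' : forall i, i < m.+1 -> nth x1 s' i = nth x1 s i.
  by move=> i hi; rewrite nth_take.
have mems' : forall v, v \in s' -> v \in s by move=> v /mem_take.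
have [hIsub hIst hIc] := hisr.
have cly : forall v, v \in I -> part v = part y -> v = y.
  move=> v vI pv.
  have ny := isr_sub hisr yI.
  have := hIc (part y); rewrite !inE ny => /(_ isT) /eqP /cards1P [a ha].
  have : v \in [set v in I | part v == part y] by rewrite !inE vI pv eqxx.
  have : y \in [set v in I | part v == part y] by rewrite !inE yI eqxx.
  by rewrite ha !inE => /eqP -> /eqP ->.
have zI : z \notin I.
  by apply/negP => zI; move: zy; rewrite (@cly z zI (esym py)) eqxx.
have hisr' : ISR e part [set~ ord_max] I'.
  split.
  - apply/subsetP => v; rewrite !inE => /orP[/eqP->|/andP[_ vI]].
    + by rewrite /z -py (isr_sub hisr yI).
    + exact: (isr_sub hisr vI).
  - move=> v w; rewrite !inE => /orP[/eqP->|/andP[_ vI]] /orP[/eqP->|/andP[_ wI]].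
    + by rewrite eirr.
    + by rewrite esy hno.
    + by rewrite hno.
    + exact: hIst.
  - move=> i hi; case: (eqVneq i (part y)) => [->|hiy].
    + have -> : [set v in I' | part v == part y] = [set z].
        apply/setP => v; rewrite !inE; case: (eqVneq v z) => [->|vz] /=.
          by rewrite /z py eqxx.
        by apply/andP => -[/andP[vy vI] /eqP pv]; move: vy; rewrite (cly v vI pv) eqxx.
      by rewrite cards1.
    + rewrite -(hIc i hi); apply: eq_card => v; rewrite !inE.
      case: (eqVneq v z) => [->|vz] /=.
        by rewrite (negbTE zI) /z -py eq_sym (negbTE hiy).
      case: (eqVneq v y) => [->|vy] //=.
      by rewrite yI eq_sym (negbTE hiy).
exists I', s'; split.
- constructor => //.
  + by rewrite szs'.
  + by rewrite nths'.
  + exact: take_uniq.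
  + by move=> a b /mems' ha /mems' hb; apply: hst.
  + move=> y0 a b; rewrite !inE => /orP[/eqP->|/andP[_ y0I]] ha hb.
      by rewrite (negbTE (hst _ _ zs (mems' _ ha))).
    by apply: hnb => //; apply: mems'.
  + move=> k'; rewrite szs' => hk'.
    have hk'2 : 0 < k' < size s.
      by case/andP: hk' => -> hk'm; rewrite (leq_trans hk'm).
    have [y' y'I [py' [m' m'k' ey']]] := hord k' hk'2.
    have m'm : m' < m.
      by case/andP: hk' => _ hk'm; rewrite (leq_trans m'k').
    exists y'.
      rewrite !inE y'I andbT; apply/orP; right; apply/eqP => y'y.
      have := hnb y _ _ yI (mem_nth x1 (ltn_trans m'm ms)) xms.
      rewrite -{1}y'y => /(_ ey' eym) /eqP.
      rewrite nth_uniq // ?(ltn_trans m'm ms) // => /eqP h.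
      by move: m'm; rewrite h ltnn.
    case/andP: hk' => _ hk'm.
    rewrite nths' //; split => //; exists m' => //.
    by rewrite nths' // (ltn_trans m'k').
- apply: (@Phi_lt _ _ _ _ _ _ _ m).
  + exact: (leq_trans ms (uniq_size_le hun)).
  + move=> i hi; rewrite /qv szs' (ltn_trans hi (ltnSn m)) (ltn_trans hi ms).
    rewrite nths' ?(ltn_trans hi (ltnSn m)) //.
    rewrite /nbI; apply: eq_card => v; rewrite !inE.
    have xis : nth x1 s i \in s by apply: mem_nth; apply: ltn_trans hi ms.
    case: (eqVneq v z) => [->|vz] /=.
      by rewrite (negbTE zI) (negbTE (hst _ _ zs xis)).
    case: (eqVneq v y) => [->|vy] //=.
    rewrite yI /=; apply/esym/negbTE/negP => eyi.
    have := hnb y _ _ yI xis xms eyi eym => /eqP.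
    rewrite nth_uniq // ?(ltn_trans hi ms) // => /eqP h.
    by move: hi; rewrite h ltnn.
  + rewrite /qv szs' ltnSn ms nths' // /nbI.
    have -> : [set v in I' | e v (nth x1 s m)] = [set v in I | e v (nth x1 s m)] :\ y.
      apply/setP => v; rewrite !inE.
      case: (eqVneq v z) => [->|vz] /=.
        by rewrite (negbTE zI) (negbTE (hst _ _ zs xms)) !andbF.
      by rewrite andbA.
    rewrite [X in _ < X](cardsD1 y) !inE yI eym /=.
    exact: ltnSn.
Qed.

Definition Struct (T : finType) (e : rel T) (r : nat) (part : T -> 'I_r.+1) (x1 : T)
  (J : {set 'I_r.+1}) (X Y : {set T}) : Prop :=
        [/\ J \subset [set~ ord_max],
            X :|: Y \subset VJ part J :|: [set x1],
            totally_dominates e (X :|: Y) (VJ part J :|: [set x1]),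
            [disjoint X & Y] & stable e X] /\
        [/\ partial_ISR e part J Y,
            (forall y, y \in Y -> #|[set x in X | e y x]| = 1) &
            x1 \in X].

Lemma step_grow (T : finType) (e : rel T) r (part : T -> 'I_r.+1) x1 I s :
  simple_graph e -> ~ (exists J X Y, Struct e part x1 J X Y) ->
  Inv e part x1 I s -> (forall x, x \in s -> exists2 y, y \in I & e y x) ->
  exists s', Inv e part x1 I s' /\ Phi e x1 I s' < Phi e x1 I s.
Proof.
move=> [esy eirr] hno hinv hnb1.
have [hisr hsz hhd hun hst hnb hord] := hinv.
have [hIsub hIst hIc] := hisr.
set X := [set x in s].
set Y := [set y in I | [exists x in X, e y x]].
set J := [set part y | y in Y].
have pI : forall y, y \in I -> part y \in [set~ ord_max].
  by move=> y /(subsetP hIsub); rewrite inE.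
have YI : forall y, y \in Y -> y \in I by move=> y; rewrite inE => /andP[].
have nbY : forall x, x \in s -> exists2 y, y \in Y & e y x.
  move=> x xs; have [y yI eyx] := hnb1 x xs; exists y => //.
  by rewrite inE yI /=; apply/exists_inP; exists x; rewrite ?inE.
have x1s : x1 \in s by rewrite -{1}hhd mem_nth.
have hdom : ~~ [forall w in VJ part J :|: [set x1], [exists d in X :|: Y, e w d]].
  apply/negP => hf; apply: hno; exists J, X, Y; split; split.
  - apply/subsetP => i /imsetP [y yY ->]; exact: (pI _ (YI _ yY)).
  - apply/subsetP => v; rewrite in_setU => /orP[|vY]; last first.
      by rewrite in_setU; apply/orP; left; rewrite /VJ inE; apply/imsetP; exists v.
    rewrite !inE => vs.
    have [k ks <-] : exists2 k, k < size s & nth x1 s k = v.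
        by exists (index v s); rewrite ?index_mem ?nth_index.
      case: k ks => [|k] ks; first by rewrite hhd eqxx orbT.
      have [y yI [py [m mk eym]]] := hord k.+1 ks.
      apply/orP; left; rewrite -py; apply/imsetP; exists y => //.
      rewrite inE yI /=; apply/exists_inP; exists (nth x1 s m) => //.
      by rewrite inE mem_nth // (ltn_trans mk).
  - by move=> w /(forall_inP hf) /exists_inP [d hd hwd]; exists d.
  - apply/pred0P => v /=; rewrite !inE; apply/negP => /and3P[vs vI /exists_inP [x]].
    by rewrite inE => xs; rewrite (negbTE (hst _ _ vs xs)).
  - by move=> a b; rewrite !inE; apply: hst.
  - split.
    + apply/subsetP => y yY; rewrite inE; apply/imsetP; by exists y.
    + by move=> a b /YI ha /YI hb; apply: hIst.
    + move=> i /imsetP [y yY ->].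
      rewrite -(hIc (part y)); last exact: (pI _ (YI _ yY)).
      apply: subset_leq_card; apply/subsetP => v; rewrite !inE => /andP[/andP[-> _] ->].
      by [].
  - move=> y; rewrite inE => /andP[yI /exists_inP [x xX exy]].
    apply/eqP/cards1P; exists x; apply/setP => v; rewrite !inE.
    have xs : x \in s by rewrite inE in xX.
    apply/andP/eqP => [[vs eyv]|->]; last by rewrite xs.
    exact: (hnb y v x yI vs xs eyv exy).
  - by rewrite inE.
move/forall_inPn: hdom => [w hw /exists_inPn hnd].
have ws : w \notin s.
  apply/negP => ws; have [y yY eyw] := nbY w ws.
  by move: (hnd y); rewrite in_setU yY orbT esy eyw => /(_ isT).
have [y0 y0Y py0] : exists2 y0, y0 \in Y & part w = part y0.
  move: hw; rewrite !inE => /orP[/imsetP [y yY ->]|/eqP wx]; first by exists y.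
  by move: ws; rewrite wx x1s.
have Y0s : exists2 m, m < size s & e y0 (nth x1 s m).
  move: y0Y; rewrite inE => /andP[_ /exists_inP [x]]; rewrite inE => xs exy.
  by exists (index x s); rewrite ?index_mem ?nth_index.
have wnX : forall x, x \in s -> ~~ e w x.
  by move=> x xs; apply: hnd; rewrite !inE xs.
have wnY : forall y, y \in Y -> ~~ e w y.
  by move=> y yY; apply: hnd; rewrite in_setU yY orbT.
exists (rcons s w); split.
- constructor => //.
  + by rewrite size_rcons.
  + by rewrite nth_rcons hsz.
  + by rewrite rcons_uniq ws.
  + move=> a b; rewrite !mem_rcons !in_cons => /orP[/eqP->|ha] /orP[/eqP->|hb].
    * by rewrite eirr.
    * exact: wnX.
    * by rewrite esy wnX.
    * exact: hst.
  + move=> y a b yI; rewrite !mem_rcons !in_cons => /orP[/eqP->|ha] /orP[/eqP->|hb] //.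
    * move=> eyw eyb; have yY : y \in Y.
        by rewrite inE yI /=; apply/exists_inP; exists b; rewrite ?inE.
      by move: (wnY y yY); rewrite esy eyw.
    * move=> eya eyw; have yY : y \in Y.
        by rewrite inE yI /=; apply/exists_inP; exists a; rewrite ?inE.
      by move: (wnY y yY); rewrite esy eyw.
    * exact: hnb.
  + move=> k; rewrite size_rcons ltnS => /andP[k0 ks].
    rewrite nth_rcons; case: ltnP => hks.
      have hk2 : 0 < k < size s by rewrite k0.
      have [y yI [py [m mk eym]]] := hord k hk2.
      exists y => //; split => //; exists m => //.
      by rewrite nth_rcons (ltn_trans mk hks).
    have -> : k = size s by apply/eqP; rewrite eqn_leq ks.
    rewrite eqxx; exists y0; first exact: YI.
    split => //; have [m ms em] := Y0s; exists m => //.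
    by rewrite nth_rcons ms.
- have hT : size s < #|T|.
    have := uniq_size_le (_ : uniq (rcons s w)); rewrite size_rcons; apply.
    by rewrite rcons_uniq ws.
  apply: (@Phi_lt _ _ _ _ _ _ _ (size s)) => //.
  + move=> i hi; rewrite /qv size_rcons (ltn_trans hi (ltnSn _)) hi.
    by rewrite nth_rcons hi.
  + rewrite /qv size_rcons ltnSn ltnn /nbI ltnS.
    exact: max_card.
Qed.

Lemma loop (T : finType) (e : rel T) r (part : T -> 'I_r.+1) x1 :
  simple_graph e -> part x1 = ord_max -> ~ (exists J X Y, Struct e part x1 J X Y) ->
  forall n I s, Phi e x1 I s < n -> Inv e part x1 I s ->
  exists S, ISR e part setT S /\ x1 \in S.
Proof.
move=> hg hx1 hno; elim=> [//|n IH] I s hlt hinv.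
case: (boolP (all (fun x => [exists y in I, e y x]) s)) => hall.
  have [s' [hinv' hlt']] : exists s', Inv e part x1 I s' /\ Phi e x1 I s' < Phi e x1 I s.
    apply: step_grow => // x xs.
    by have /exists_inP[y yI eyx] := allP hall x xs; exists y.
  by apply: (IH I s') => //; apply: leq_trans hlt' hlt.
move/allPn: hall => [x xs /exists_inPn hx].
have xk : nth x1 s (index x s) = x by apply: nth_index.
case k0: (index x s) => [|k].
  apply: step_x1 => //; first exact: (inv_isr hinv).
  by move: xk; rewrite k0 (inv_head hinv) => ->.
have hk : 0 < k.+1 < size s by rewrite ltn0Sn /= -k0 index_mem.
have hxk : forall y, y \in I -> ~~ e y (nth x1 s k.+1) by rewrite -k0 xk.
have [I' [s' [hinv' hlt']]] := @step_swap _ _ _ _ _ _ _ k.+1 hg hinv hk hxk.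
by apply: (IH I' s') => //; apply: leq_trans hlt' hlt.
Qed.

Theorem lemma3 (T : finType) (e : rel T) (r : nat) (part : T -> 'I_r.+1)
  (x1 : T) :
  simple_graph e ->
  (forall i : 'I_r.+1, stable e [set v | part v == i]) ->
  part x1 = ord_max ->
  (exists S, ISR e part [set~ ord_max] S) ->
  ~ (exists (J : {set 'I_r.+1}) (X Y : {set T}),
        [/\ J \subset [set~ ord_max],
            X :|: Y \subset VJ part J :|: [set x1],
            totally_dominates e (X :|: Y) (VJ part J :|: [set x1]),
            [disjoint X & Y] & stable e X] /\
        [/\ partial_ISR e part J Y,
            (forall y, y \in Y -> #|[set x in X | e y x]| = 1) &
            x1 \in X]) ->
  exists S, ISR e part setT S /\ x1 \in S.
Proof.
move=> hg _ hx1 [S hS] hno.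
have [_ eirr] := hg.
apply: (@loop T e r part x1 hg hx1 hno (Phi e x1 S [:: x1]).+1 S [:: x1]) => //.
constructor => //.
- by move=> a b; rewrite !inE => /eqP -> /eqP ->; rewrite eirr.
- by move=> y a b _; rewrite !inE => /eqP -> /eqP ->.
- by case=> [|k] /andP[].
Qed.
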